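(* Let $n\ge0$ and let $a_1,\dots,a_{n+1},b_1,\dots,b_n$ be nonzero integers; let $s=[2a_1,2b_1,2a_2,2b_2,\dots,2a_n,2b_n,2a_{n+1}]$, let $k\ne0$ be an integer, and let $$r=[2a_1,2b_1,\dots,2b_n,2a_{n+1},\,2k,\,-2a_{n+1},-2b_n,\dots,-2b_1,-2a_1].$$ Then $K(s)$ and $K(r)$ are 2-component 2-bridge links, and their two-variable Alexander polynomials satisfy $$\Delta_{K(r)}(x,y)=\varepsilon\,x^iy^j\,k\,(x-1)(y-1)\,\big[\Delta_{K(s)}(x,y)\big]^2$$ for some $\varepsilon\in\{\pm1\}$ and integers $i,j$. Consequently $\Delta_{K(r)}(x,y)$ has no zero $(x,y)$ with $\operatorname{Im}x>0$ and $\operatorname{Im}y>0$ if and only if the same holds for $\Delta_{K(s)}(x,y)$.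
   Context: Two-variable Alexander polynomial convention: for $m\in\mathbb Z$ put $G_m=\frac{x^m-y^m}{x-y}$ for $m>0$, $G_0=0$, $G_{-m}=-(xy)^{-m}G_m$ for $m>0$. For $s=[2a_1,2b_1,\dots,2a_N,2b_N,2a_{N+1}]$ the two-variable Alexander polynomial of the 2-bridge link $K(s)$ (oriented as in the standard convention) is, up to units $\pm x^iy^j$, $$\Delta_{K(s)}(x,y)=\sum b_{j_1}\cdots b_{j_m}(x-1)^m(y-1)^mG_{\mu_1}\cdots G_{\mu_{m+1}},$$ the sum over all subsets $\{j_1<\dots<j_m\}\subseteq\{1,\dots,N\}$ ($0\le m\le N$), where $\mu_1=a_1+\dots+a_{j_1}$, $\mu_l=a_{j_{l-1}+1}+\dots+a_{j_l}$, and $\mu_{m+1}=a_{j_m+1}+\dots+a_{N+1}$. Here $K(s)$ is the 2-bridge link with rational number having even continued fraction expansion $1/(s_1-1/(s_2-\cdots))$. *)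

(* Defs.v *)
From HB Require Import structures.
From mathcomp Require Import all_boot all_order all_algebra all_field.
Set Implicit Arguments. Unset Strict Implicit. Unset Printing Implicit Defensive.
Import Order.TTheory GRing.Theory Num.Theory.
Local Open Scope ring_scope.

(* G_m for m : int, evaluated at x y in a commutative unit ring.
   For m > 0, G_m = (x^m - y^m)/(x - y) written out as the polynomial
   sum_{i<m} x^i y^(m-1-i); G_0 = 0; G_{-m} = -(xy)^{-m} G_m. *)
Definition Gpos (R : comUnitRingType) (x y : R) (m : nat) : R :=
  \sum_(i < m) x ^+ i * y ^+ (m - 1 - i)%N.

Definition G (R : comUnitRingType) (x y : R) (m : int) : R :=
  match m with
  | Posz m => Gpos x y m
  | Negz m' => - ((x * y) ^- m'.+1) * Gpos x y m'.+1
  end.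

(* Block sums mu_1, ..., mu_{m+1}: as = [a_1; ...; a_{N+1}],
   c = [c_1; ...; c_N] with c_j = true iff j is in the chosen subset
   (cut after a_j). *)
Fixpoint blocks (as_ : seq int) (c : seq bool) (acc : int) : seq int :=
  match as_, c with
  | a :: as', true :: c' => (acc + a) :: blocks as' c' 0
  | a :: as', false :: c' => blocks as' c' (acc + a)
  | a :: as', [::] => blocks as' [::] (acc + a)
  | [::], _ => [:: acc]
  end.

Definition s_as (s : seq int) : seq int :=
  [seq (nth 0 s (2 * i)%N %/ 2)%Z | i <- iota 0 (uphalf (size s))].
Definition s_bs (s : seq int) : seq int :=
  [seq (nth 0 s (2 * i).+1 %/ 2)%Z | i <- iota 0 (size s)./2].

(* Two-variable Alexander polynomial of K(s) (the formula of the paper),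
   evaluated at x y : R. Sum over subsets J of {1..N} (here 'I_N). *)
Definition Delta (R : comUnitRingType) (x y : R) (s : seq int) : R :=
  let as_ := s_as s in let bs := s_bs s in let N := size bs in
  \sum_(J : {set 'I_N})
    (\prod_(j in J) (nth 0 bs j)%:~R) * ((x - 1) * (y - 1)) ^+ #|J| *
    \prod_(mu <- blocks as_ [seq j \in J | j <- enum 'I_N] 0) G x y mu.

Fixpoint interleave (as_ bs : seq int) : seq int :=
  match as_, bs with
  | a :: as', b :: bs' => a :: b :: interleave as' bs'
  | _, _ => as_
  end.
Definition evencf (as_ bs : seq int) : seq int :=
  [seq 2 * z | z <- interleave as_ bs].

Definition cf (s : seq int) : rat :=
  foldr (fun si t => (si%:~R - t)^-1) 0 s.

(* K(s) is a 2-component link: the 2-bridge link with fraction q/p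
   (lowest terms) has 2 components iff p is even (Schubert). *)
Definition two_component (s : seq int) : Prop := (2 %| denq (cf s))%Z.

(* Generic variables x, y of the field of fractions of Z[x][y]:
   Laurent polynomials in x, y live in this field. *)
Notation LF := {fraction {poly {poly int}}}.
Definition Xv : LF := FracField.tofrac ('X : {poly {poly int}}).
Definition Yv : LF := FracField.tofrac ((('X : {poly int}))%:P : {poly {poly int}}).

(* Main.v *)
Require Import Defs.
From HB Require Import structures.
From mathcomp Require Import all_boot all_order all_algebra all_field.
From mathcomp Require Import ring zify.
Import Order.TTheory GRing.Theory Num.Theory.
Local Open Scope ring_scope.

Fixpoint allb n : seq (seq bool) :=
  if n is n'.+1 then map (cons false) (allb n') ++ map (cons true) (allb n') else [:: [::]].

Lemma mem_allb N c : (c \in allb N) = (size c == N).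
Proof.
elim: N c => [|N IH] [|h c] //=; rewrite mem_cat.
  by apply/norP; split; apply/mapP => -[].
rewrite eqSS -IH; apply/orP/idP.
  by case=> /mapP [c' h' [_ ->]].
by move=> hc; case: h; [right|left]; apply/mapP; exists c.
Qed.

Lemma allb_uniq N : uniq (allb N).
Proof.
elim: N => [|N IH] //=; rewrite cat_uniq !map_inj_uniq ?IH //; try by move=> ?? [].
by rewrite andbT; apply/hasPn => c /mapP [c' _ ->]; apply/mapP => -[].
Qed.

Lemma sum_sets (V : nmodType) N (F : seq bool -> V) :
  \sum_(J : {set 'I_N}) F [seq j \in J | j <- enum 'I_N] = \sum_(c <- allb N) F c.
Proof.
rewrite -(big_map (fun J : {set 'I_N} => [seq j \in J | j <- enum 'I_N]) xpredT F).
apply: perm_big; apply: uniq_perm; rewrite ?allb_uniq //.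
  rewrite map_inj_uniq ?index_enum_uniq // => J1 J2 e; apply/setP => i.
  have E : nth false [seq j \in J1 | j <- enum 'I_N] i = nth false [seq j \in J2 | j <- enum 'I_N] i.
    by rewrite e.
  by rewrite !(nth_map i) -?enumT ?size_enum_ord ?nth_ord_enum // in E.
move=> c; rewrite mem_allb; apply/mapP/eqP.
  by case=> J _ ->; rewrite size_map size_enum_ord.
move=> hc; exists [set i : 'I_N | nth false c i]; first exact: mem_index_enum.
apply: (@eq_from_nth _ false); first by rewrite size_map size_enum_ord.
move=> i; rewrite hc => hi; have -> : i = Ordinal hi by [].
by rewrite (nth_map (Ordinal hi)) ?size_enum_ord // nth_ord_enum inE.
Qed.

Lemma size_inter (a b : seq int) : size a = (size b).+1 -> size (interleave a b) = (size b).*2.+1.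
Proof. elim: b a => [|z b IH] [|w a] //= [] h; rewrite IH //. Qed.

Lemma nth_inter_even (a b : seq int) i : size a = (size b).+1 ->
  nth 0 (interleave a b) (i.*2) = nth 0 a i.
Proof.
elim: b a i => [|z b IH] [|w a] i //=.
  case: a => [_|? ? h]; first by case: i => [|i]; rewrite ?doubleS /= ?nth_nil.
  by move: h => /= [].
by case=> h; case: i => [|i] //=; rewrite IH.
Qed.

Lemma nth_inter_odd (a b : seq int) i : size a = (size b).+1 ->
  nth 0 (interleave a b) (i.*2.+1) = nth 0 b i.
Proof.
elim: b a i => [|z b IH] [|w a] i //=.
  case: a => [_|? ? h]; first by case: i => [|i]; rewrite ?doubleS /= ?nth_nil.
  by move: h => /= [].
by case=> h; case: i => [|i] //=; rewrite IH.
Qed.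

Lemma two_div (z : int) : ((2 * z) %/ 2)%Z = z.
Proof. by rewrite mulKz. Qed.

Lemma s_evencf (a b : seq int) : size a = (size b).+1 ->
  s_as (evencf a b) = a /\ s_bs (evencf a b) = b.
Proof.
move=> h; rewrite /s_as /s_bs /evencf size_map size_inter //; split.
  rewrite (_ : uphalf _ = size a); last by rewrite /= doubleK h.
  transitivity (mkseq (nth 0 a) (size a)); last exact: mkseq_nth.
  rewrite /mkseq; apply/eq_in_map => i.
  rewrite mem_iota add0n => /andP [_ hi].
  rewrite mul2n (nth_map 0) ?size_inter ?nth_inter_even ?two_div //.
  by rewrite ltnS leq_double -ltnS -h.
rewrite (_ : ((size b).*2.+1)./2 = size b); last by rewrite /= uphalf_double.
transitivity (mkseq (nth 0 b) (size b)); last exact: mkseq_nth.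
rewrite /mkseq; apply/eq_in_map => i.
rewrite mem_iota add0n => /andP [_ hi].
rewrite mul2n (nth_map 0) ?size_inter ?nth_inter_odd ?two_div //.
by rewrite ltnS ltn_double.
Qed.

Lemma dist_step (z v u : int) : z != 0 -> `|u| < `|v| -> `|v| < `|2 * z * v - u|.
Proof. move=> hz h. have hz1 : 1 <= `|z| by lia.
  have e : `|2 * z * v| = 2 * `|z| * `|v| by rewrite !normrM.
  have t := ler_distD (2*z*v) u. nia. Qed.

Lemma cf_even (l : seq int) : all (fun z => z != 0) l ->
  exists u v : int, cf (map (fun z => 2 * z) l) = u%:~R / v%:~R /\ `|u| < `|v| /\
   (if odd (size l) then (exists u', u = 2 * u' + 1) /\ (exists v', v = 2 * v')
    else (exists u', u = 2 * u') /\ (exists v', v = 2 * v' + 1)).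
Proof.
elim: l => [|z l IH] /=.
  move=> _; exists 0, 1; rewrite mul0r normr0 normr1 ltr01; split => //; split => //.
  by split; exists 0; rewrite mulr0 ?add0r.
case/andP => hz hl; have [u [v [e [lt par]]]] := IH hl.
have hv : v != 0 by rewrite -normr_gt0; apply: le_lt_trans lt.
have lt2 := dist_step _ _ _ hz lt.
have hw : 2 * z * v - u != 0 by rewrite -normr_gt0; apply: le_lt_trans lt2.
exists v, (2 * z * v - u); split; last split => //.
  rewrite /cf /= -/(cf _) e.
  have hv' : v%:~R != 0 :> rat by rewrite intr_eq0.
  have hw' : (2 * z * v - u)%:~R != 0 :> rat by rewrite intr_eq0.
  rewrite !intrD !intrN !intrM in hw' *.
  field; rewrite hv' andbT; exact: hw'.
case: (odd (size l)) par => -[[u' eu] [v' ev]].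
  by split; [exists v' | exists (2 * z * v' - u' - 1)]; rewrite ?eu ?ev; ring.
by split; [exists v' | exists (z * v - u')]; rewrite ?eu ?ev; ring.
Qed.

Lemma all_inter (p : pred int) a b : all p a -> all p b -> all p (interleave a b).
Proof.
elim: a b => [|w a IH] b //=; case: b => [|z b] /andP [hw ha] /=; first by rewrite hw ha.
by case/andP => hz hb; rewrite hw hz IH.
Qed.

Lemma two_comp (a b : seq int) : size a = (size b).+1 ->
  all (fun z => z != 0) a -> all (fun z => z != 0) b -> two_component (evencf a b).
Proof.
move=> h ha hb; have hall := all_inter _ _ _ ha hb.
have [u [v [e [lt par]]]] := cf_even _ hall.
rewrite size_inter //= odd_double in par; case: par => [[u' eu] [v' ev]].
rewrite /two_component /evencf e.
set t := u%:~R / v%:~R.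
have hv : v != 0 by rewrite -normr_gt0; apply: le_lt_trans lt.
have E : numq t * v = u * denq t.
  apply: (@intr_inj rat); rewrite !intrM; apply/eqP.
  rewrite -eqr_div ?intr_eq0 ?denq_neq0 //.
  by rewrite divq_num_den.
apply/dvdzP; exists (numq t * v' - u' * denq t).
rewrite eu ev in E; nia.
Qed.

Section Mat.
Variables (R : fieldType) (x y : R).
Hypotheses (hx : x != 0) (hy : y != 0).

Record m2 := M2 {e11 : R; e12 : R; e21 : R; e22 : R}.
Definition mm (A B : m2) := M2 (e11 A * e11 B + e12 A * e21 B) (e11 A * e12 B + e12 A * e22 B)
   (e21 A * e11 B + e22 A * e21 B) (e21 A * e12 B + e22 A * e22 B).
Definition m1 := M2 1 0 0 1.

Lemma mmA A B C : mm A (mm B C) = mm (mm A B) C.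
Proof. case: A => ????; case: B => ????; case: C => ????; rewrite /mm /=; congr M2; ring. Qed.
Lemma mm1 A : mm A m1 = A.
Proof. case: A => ????; rewrite /mm /=; congr M2; ring. Qed.
Lemma m1m A : mm m1 A = A.
Proof. case: A => ????; rewrite /mm /=; congr M2; ring. Qed.

Lemma Gpos0 : Gpos x y 0 = 0.
Proof. by rewrite /Gpos big_ord0. Qed.

Lemma Gpos_S n : Gpos x y n.+1 = x ^+ n + y * Gpos x y n.
Proof.
rewrite /Gpos big_ord_recr /= addrC; congr (_ + _).
  by rewrite (_ : (n.+1 - 1 - n = 0)%N) ?expr0 ?mulr1 //; lia.
rewrite big_distrr /=; apply: eq_bigr => i _.
rewrite (_ : (n.+1 - 1 - i = (n - 1 - i).+1)%N); last by have := ltn_ord i; lia.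
by rewrite exprS mulrCA.
Qed.

Lemma Gpos_T n : (x - y) * Gpos x y n = x ^+ n - y ^+ n.
Proof. elim: n => [|n IH]; first by rewrite Gpos0 mulr0 !expr0 subrr.
rewrite Gpos_S mulrDr mulrCA IH !exprS; ring. Qed.

Lemma Gpos_add p q : Gpos x y (p + q) = y ^+ q * Gpos x y p + x ^+ p * Gpos x y q.
Proof. elim: q => [|q IH]; first by rewrite addn0 Gpos0 mulr0 addr0 expr0 mul1r.
by rewrite addnS !Gpos_S IH exprS exprD; ring. Qed.

Lemma Gneg q : G x y (- q%:Z) = - (x * y) ^- q * Gpos x y q.
Proof. case: q => [|q]; first by rewrite oppr0 /= Gpos0 mulr0.
by rewrite -NegzE. Qed.

Definition Mm (m : int) := M2 (x ^ m) (G x y m) 0 (y ^ m).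

Lemma Mp (p : nat) : Mm p = M2 (x ^+ p) (Gpos x y p) 0 (y ^+ p).
Proof. by rewrite /Mm -!exprnP. Qed.
Lemma Mn (p : nat) : Mm (- p%:Z) = M2 (x ^- p) (- (x ^- p * y ^- p) * Gpos x y p) 0 (y ^- p).
Proof. by rewrite /Mm Gneg -!exprnN exprMn invfM. Qed.

Lemma xp (p : nat) : x ^+ p != 0. Proof. exact: expf_neq0. Qed.
Lemma yp (p : nat) : y ^+ p != 0. Proof. exact: expf_neq0. Qed.

Lemma Mpp (p q : nat) : mm (Mm p) (Mm q) = Mm (p + q)%N.
Proof. rewrite !Mp /mm /=; congr M2; rewrite ?exprD ?Gpos_add; try ring. Qed.

Lemma Mpn (p : nat) : mm (Mm p) (Mm (- p%:Z)) = m1.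
Proof. rewrite Mp Mn /mm /= /m1; congr M2; field; by rewrite ?xp ?yp. Qed.
Lemma Mnp (p : nat) : mm (Mm (- p%:Z)) (Mm p) = m1.
Proof. rewrite Mp Mn /mm /= /m1; congr M2; field; by rewrite ?xp ?yp. Qed.


Lemma Mcomm (p q : nat) : mm (Mm (- q%:Z)) (Mm p) = mm (Mm p) (Mm (- q%:Z)).
Proof.
rewrite Mp Mn /mm /=; congr M2; try ring.
have K : (x ^+ q - y ^+ q) * Gpos x y p - (x ^+ p - y ^+ p) * Gpos x y q = 0.
  by rewrite -!Gpos_T; ring.
apply/eqP; rewrite -subr_eq0; apply/eqP.
transitivity (- (x ^- q * y ^- q) * ((x ^+ q - y ^+ q) * Gpos x y p - (x ^+ p - y ^+ p) * Gpos x y q)).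
  field; by rewrite ?xp ?yp.
by rewrite K mulr0.
Qed.

Lemma Mnn (p q : nat) : mm (Mm (- p%:Z)) (Mm (- q%:Z)) = Mm (- (p + q)%N%:Z).
Proof.
rewrite !Mn /mm /= addnC Gpos_add !exprD !invfM; congr M2; try ring; field; by rewrite ?xp ?yp.
Qed.

Lemma Msub (p q : nat) : Mm (p%:Z - q%:Z) = mm (Mm p) (Mm (- q%:Z)).
Proof.
case: (leqP q p) => h.
  have -> : p = (p - q + q)%N by lia.
  rewrite -Mpp -mmA Mpn mm1; congr Mm; lia.
have -> : q = (p + (q - p))%N by lia.
rewrite -Mnn mmA Mpn m1m; congr Mm; lia.
Qed.

Lemma intsub (m : int) : exists p q : nat, m = p%:Z - q%:Z.
Proof. case: m => [p|n]; first by exists p, 0%N; rewrite subr0.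
by exists 0%N, n.+1; rewrite NegzE sub0r. Qed.

Lemma Madd (m n : int) : mm (Mm m) (Mm n) = Mm (m + n).
Proof.
have [p1 [q1 ->]] := intsub m; have [p2 [q2 ->]] := intsub n.
have -> : p1%:Z - q1%:Z + (p2%:Z - q2%:Z) = (p1 + p2)%N%:Z - (q1 + q2)%N%:Z by lia.
rewrite !Msub -Mpp -Mnn -!mmA; congr mm; rewrite !mmA; congr mm.
by rewrite Mcomm.
Qed.


Definition u := (x - 1) * (y - 1).
Definition Cm (b : int) := M2 1 0 (b%:~R * u) 1.

Lemma Cinv b : mm (Cm b) (Cm (- b)) = m1.
Proof. rewrite /mm /Cm /m1 /= rmorphN; congr M2; ring. Qed.

Fixpoint P (as_ bs : seq int) : m2 :=
  match as_, bs with
  | a :: as', b :: bs' => mm (Mm a) (mm (Cm b) (P as' bs'))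
  | a :: as', [::] => mm (Mm a) (P as' [::])
  | [::], _ => m1
  end.

Lemma M0 : Mm 0 = m1.
Proof. by rewrite (Mp 0) Gpos0 !expr0. Qed.

Lemma Psplit as_ bs as2 bs2 k : size as_ = (size bs).+1 ->
  P (as_ ++ as2) (bs ++ k :: bs2) = mm (P as_ bs) (mm (Cm k) (P as2 bs2)).
Proof.
elim: bs as_ => [|b bs IH] [|a as_] //=.
  by case: as_ => //= _; rewrite mm1.
by case=> h; rewrite IH // !mmA.
Qed.

Lemma Pinv as_ bs : size as_ = (size bs).+1 ->
  mm (P as_ bs) (P (map -%R (rev as_)) (map -%R (rev bs))) = m1.
Proof.
elim: bs as_ => [|b bs IH] [|a as_] //=.
  by case: as_ => //= _; rewrite !mm1 Madd subrr M0.
case=> h; rewrite !rev_cons -!cats1 !map_cat Psplit; last by rewrite !size_map !size_rev.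
rewrite /= !mm1 !mmA -(mmA (mm (Mm a) (Cm b))) IH ?mm1 //.
by rewrite -(mmA (Mm a)) Cinv mm1 Madd subrr M0.
Qed.

Definition det (A : m2) := e11 A * e22 A - e12 A * e21 A.
Lemma det_mm A B : det (mm A B) = det A * det B.
Proof. case: A => ????; case: B => ????; rewrite /det /mm /=; ring. Qed.

Lemma det_P as_ bs : det (P as_ bs) = x ^ (\sum_(z <- as_) z) * y ^ (\sum_(z <- as_) z).
Proof.
elim: as_ bs => [|a as_ IH] [|b bs].
- by rewrite big_nil !expr0z /det /=; ring.
- by rewrite big_nil !expr0z /det /=; ring.
- rewrite big_cons /= det_mm IH !expfzDr //; rewrite /det /=; ring.
- rewrite big_cons /= !det_mm IH !expfzDr //; rewrite /det /=; ring.
Qed.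

Lemma Q12 A B : mm A B = m1 -> det A != 0 -> e12 B = - e12 A / det A.
Proof.
move=> h dn; have h12 := congr1 e12 h; have h22 := congr1 e22 h; clear h.
case: A h12 h22 dn => a11 a12 a21 a22; case: B => b11 b12 b21 b22.
rewrite /mm /m1 /det /= => h12 h22 dn.
have E : (a11 * a22 - a12 * a21) * b12 = - a12.
  transitivity (a22 * (a11 * b12 + a12 * b22) - a12 * (a21 * b12 + a22 * b22)); first ring.
  by rewrite h12 h22; ring.
by rewrite -E mulrAC mulfV ?mul1r.
Qed.

Lemma PCQ A B k : mm A B = m1 -> e12 (mm A (mm (Cm k) B)) = k%:~R * u * e12 A * e12 B.
Proof.
move=> h; have h12 := congr1 e12 h; clear h.
case: A h12 => a11 a12 a21 a22; case: B => b11 b12 b21 b22.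
rewrite /mm /m1 /Cm /= => h12.
transitivity ((a11 * b12 + a12 * b22) + k%:~R * u * a12 * b12); first ring.
by rewrite h12 add0r.
Qed.


Definition T acc as_ bs (c : seq bool) : R :=
  (\prod_(i < size bs | nth false c i) (nth 0 bs i)%:~R) * u ^+ count id c *
  \prod_(mu <- blocks as_ c acc) G x y mu.


Definition Dsum acc as_ bs := \sum_(c <- allb (size bs)) T acc as_ bs c.

Lemma prod_cons (h : bool) (b : int) bs c :
  \prod_(i < size (b :: bs) | nth false (h :: c) i) (nth 0 (b :: bs) i)%:~R =
  (if h then b%:~R else 1) * \prod_(i < size bs | nth false c i) (nth 0 bs i)%:~R :> R.
Proof.
rewrite big_mkcond /= big_ord_recl /=; congr (_ * _).
rewrite [RHS]big_mkcond /=; apply: eq_bigr => i _; by rewrite add0n.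
Qed.

Lemma T_false acc a as_ b bs c : T acc (a :: as_) (b :: bs) (false :: c) = T (acc + a) as_ bs c.
Proof. by rewrite /T prod_cons mul1r /=. Qed.

Lemma T_true acc a as_ b bs c : T acc (a :: as_) (b :: bs) (true :: c) =
  b%:~R * u * G x y (acc + a) * T 0 as_ bs c.
Proof. rewrite /T prod_cons /= big_cons exprS; ring. Qed.

Lemma T_base acc a : T acc [:: a] [::] [::] = G x y (acc + a).
Proof. by rewrite /T /= big_ord0 expr0 big_seq1 !mul1r. Qed.

Lemma Dsum_cons acc a as_ b bs : Dsum acc (a :: as_) (b :: bs) =
  Dsum (acc + a) as_ bs + b%:~R * u * G x y (acc + a) * Dsum 0 as_ bs.
Proof.
rewrite /Dsum /= big_cat !big_map; congr (_ + _).
  by apply: eq_bigr => c _; rewrite T_false.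
by rewrite big_distrr; apply: eq_bigr => c _; rewrite T_true.
Qed.

Lemma P_base a : P [:: a] [::] = mm (Mm a) m1. Proof. by []. Qed.
Lemma P_cons a as_ b bs : P (a :: as_) (b :: bs) = mm (Mm a) (mm (Cm b) (P as_ bs)).
Proof. by []. Qed.

Lemma Dsum_P acc as_ bs : size as_ = (size bs).+1 -> Dsum acc as_ bs = e12 (mm (Mm acc) (P as_ bs)).
Proof.
elim: bs acc as_ => [|b bs IH] acc [|a as_] //.
  case: as_ => [_|a' as_ h]; last by move: h => /= [].
  by rewrite P_base mm1 Madd /Dsum big_seq1 T_base.
move=> h; rewrite Dsum_cons !IH; try by move: h => /= [].
rewrite M0 m1m P_cons mmA Madd.
case: (P as_ bs) => ????; rewrite /Mm /Cm /mm /=; ring.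
Qed.

Lemma Delta_Dsum s : Delta x y s = Dsum 0 (s_as s) (s_bs s).
Proof.
rewrite /Delta /Dsum; cbv zeta; rewrite -sum_sets; apply: eq_bigr => J _.
rewrite /T; congr (_ * _ * _).
  apply: eq_bigl => i; rewrite (nth_map i) -?enumT ?size_enum_ord ?nth_ord_enum //.
congr (_ ^+ _); rewrite count_map cardE /enum_mem size_filter count_filter.
by apply: eq_count => i /=; rewrite andbT.
Qed.

Lemma main_id (a b : seq int) (k : int) : size a = (size b).+1 ->
  Delta x y (evencf (a ++ map -%R (rev a)) (b ++ k :: map -%R (rev b))) =
  - (x ^ (\sum_(z <- a) z) * y ^ (\sum_(z <- a) z))^-1 * k%:~R * u * (Delta x y (evencf a b)) ^+ 2.
Proof.
move=> h.
have h2 : size (a ++ map -%R (rev a)) = (size (b ++ k :: map -%R (rev b))).+1.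
  rewrite !size_cat /= !size_map !size_rev h; lia.
have [ea eb] := s_evencf _ _ h; have [ea2 eb2] := s_evencf _ _ h2.
rewrite !Delta_Dsum ea eb ea2 eb2 !Dsum_P // M0 !m1m Psplit //.
have hinv := Pinv _ _ h.
have dn : det (P a b) != 0 by rewrite det_P mulf_neq0 // expfz_neq0.
rewrite PCQ // (Q12 _ _ hinv dn) det_P; ring.
Qed.

End Mat.

Lemma Im_nz (x : algC) : 0 < 'Im x -> x != 0 /\ x != 1.
Proof.
move=> h; split; apply/eqP => e; move: h; rewrite e.
  by have /Creal_ImP -> := real0 algC; rewrite ltxx.
by have /Creal_ImP -> := real1 algC; rewrite ltxx.
Qed.

Theorem theorem16p9 (a b : seq int) (k : int) :
  size a = (size b).+1 ->
  all (fun z => z != 0) a -> all (fun z => z != 0) b -> k != 0 ->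
  let s := evencf a b in
  let r := evencf (a ++ map -%R (rev a)) (b ++ k :: map -%R (rev b)) in
  [/\ two_component s, two_component r,
      exists (e : bool) (i j : int),
        Delta Xv Yv r = (-1) ^+ e * Xv ^ i * Yv ^ j * k%:~R
                        * (Xv - 1) * (Yv - 1) * (Delta Xv Yv s) ^+ 2
    & (forall x y : algC, 0 < 'Im x -> 0 < 'Im y -> Delta x y r != 0) <->
      (forall x y : algC, 0 < 'Im x -> 0 < 'Im y -> Delta x y s != 0)].
Proof.
move=> h ha hb hk; cbv zeta.
have h2 : size (a ++ map -%R (rev a)) = (size (b ++ k :: map -%R (rev b))).+1.
  rewrite !size_cat /= !size_map !size_rev h; lia.
have nz2 : forall l : seq int, all (fun z => z != 0) l ->
    all (fun z => z != 0) (l ++ map -%R (rev l)).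
  move=> l hl; rewrite all_cat hl /= all_map all_rev.
  by apply: sub_all hl => z /=; rewrite oppr_eq0.
split.
- exact: two_comp.
- apply: two_comp => //; rewrite ?nz2 //.
  by rewrite all_cat hb /= hk all_map all_rev; apply: sub_all hb => z /=; rewrite oppr_eq0.
- have X0 : Xv != 0 by rewrite /Xv tofrac_eq0 polyX_eq0.
  have Y0 : Yv != 0 by rewrite /Yv tofrac_eq0 polyC_eq0 polyX_eq0.
  exists true, (- \sum_(z <- a) z), (- \sum_(z <- a) z).
  rewrite (main_id _ _ _ X0 Y0 _ _ _ h) -!invr_expz invfM /u expr1; ring.
- have key : forall x y : algC, 0 < 'Im x -> 0 < 'Im y ->
      (Delta x y (evencf (a ++ map -%R (rev a)) (b ++ k :: map -%R (rev b))) != 0)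
      = (Delta x y (evencf a b) != 0).
    move=> x y hx hy; have [x0 x1] := Im_nz _ hx; have [y0 y1] := Im_nz _ hy.
    rewrite (main_id _ _ _ x0 y0 _ _ _ h) /u !mulf_eq0 !negb_or oppr_eq0 invr_eq0.
    rewrite mulf_eq0 !expfz_eq0 ?x0 ?y0 /= intr_eq0 hk !subr_eq0 x1 y1 /=.
    by rewrite (negbTE x0) (negbTE y0) !andbF /= andbb.
  by split=> H x y hx hy; [rewrite -key | rewrite key] => //; apply: H.
Qed.
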